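(* Let $t$ be an integer with $m=2t+1\geq 11$, $n=2^m+1$, $\delta_1=\frac{n}{3}$ and $\delta_2=\frac{n-3}{6}$. If $x$ is an odd integer with $\delta_2<x\leq n-1$ and $x\neq\delta_1$, then $x$ is not a coset leader modulo $n$.
   Context: For $n=2^m+1$ and an integer $x$, the 2-cyclotomic coset of $x$ modulo $n$ is $C_x=\{x\cdot 2^{j} \bmod n : j\geq 0\}\subseteq\{0,1,\dots,n-1\}$. For $0\leq x\leq n-1$, ''$x$ is a coset leader'' means that $x$ is the smallest element of $C_x$. *)

(* Defs.v *)
From mathcomp Require Import all_boot.
Set Implicit Arguments. Unset Strict Implicit. Unset Printing Implicit Defensive.

Definition in_coset (n x y : nat) : Prop := exists j : nat, y = (x * 2 ^ j) %% n.

Definition coset_leader (n x : nat) : Prop :=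
  in_coset n x x /\ forall y, in_coset n x y -> x <= y.

(* Main.v *)
Require Import Defs.
From mathcomp Require Import all_boot.
From mathcomp Require Import zify.

Lemma pow_mod6 t : exists q, 2 ^ (2 * t + 1) = 6 * q + 2.
Proof.
elim: t => [|t [q Hq]]; first by exists 0.
exists (4 * q + 1).
have -> : 2 * t.+1 + 1 = (2 * t + 1) + 2 by lia.
rewrite expnD Hq expnS expn1; lia.
Qed.

Lemma mod2 n a : a < n -> (2 * a) %% n = if 2 * a < n then 2 * a else 2 * a - n.
Proof.
move=> an; case: ifP => h; first by rewrite modn_small.
have -> : 2 * a = (2 * a - n) + n by lia.
rewrite modnDr modn_small; lia.
Qed.

Lemma negm b P : 0 < b %% (P + 1) -> (b * P) %% (P + 1) = (P + 1) - b %% (P + 1).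
Proof.
move=> h.
have Hb := divn_eq b (P + 1).
set q := b %/ (P + 1) in Hb *. set r := b %% (P + 1) in Hb h *.
have rlt : r < P + 1 by rewrite /r ltn_pmod // addn1.
have -> : b * P = (q * P + (r - 1)) * (P + 1) + ((P + 1) - r).
  rewrite Hb. case: r h rlt {Hb} => [//|r'] _ rlt.
  have -> : r'.+1 - 1 = r' by lia.
  have -> : P + 1 - r'.+1 = P - r' by lia.
  have [s ->] : exists s, P = r' + s by exists (P - r'); lia.
  rewrite addKn; nia.
rewrite modnMDl modn_small; lia.
Qed.

Theorem lemma3p4 (t m n x : nat) :
  m = 2 * t + 1 -> 11 <= m -> n = 2 ^ m + 1 ->
  odd x -> (n - 3) %/ 6 < x -> x <= n - 1 -> x <> n %/ 3 ->
  ~ coset_leader n x.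
Proof.
move=> Hm _ Hn ox Hlo Hhi Hne [_ Hlead].
have [q Hq] := pow_mod6 t.
rewrite -Hm in Hq.
have Hn6 : n = 6 * q + 3 by lia.
have Hk : (n - 3) %/ 6 = q by rewrite Hn6; lia.
have H3 : n %/ 3 = 2 * q + 1 by rewrite Hn6; lia.
rewrite Hk in Hlo; rewrite H3 in Hne.
pose a j := x * 2 ^ j %% n.
have alt : forall j, a j < n by move=> j; rewrite /a ltn_pmod // Hn; lia.
have ge : forall j, x <= a j by move=> j; apply: Hlead; exists j.
have asucc : forall j, a j.+1 = (2 * a j) %% n.
  by move=> j; rewrite /a expnS mulnCA -modnMmr mulnC.
have aneg : forall j, a (j + m) = n - a j.
  move=> j; rewrite /a expnD mulnA Hn negm //; have := ge j; rewrite /a Hn; lia.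
have up : forall j, a j <= 5 * q + 2.
  move=> j; have := ge (j + m); rewrite aneg; have := alt j; lia.
have a0 : a 0 = x by rewrite /a expn0 muln1 modn_small //; lia.
have nospec : forall j, a j != 2 * q + 1 /\ a j != 4 * q + 2.
  elim=> [|j IH]; first by rewrite a0; split; apply/eqP; [|move=> e; move: ox; rewrite e; rewrite oddD oddM].
  case: IH => IH1 IH2; rewrite asucc mod2 //; case: ifP => _; split; apply/eqP; move: IH1 IH2 => /eqP + /eqP; lia.
pose C b := (2 * q + 2 <= b) && (b <= 4 * q + 1).
have step : forall j, C (a j.+1) = ~~ C (a j).
  move=> j; have := ge j; have := up j; have := nospec j; have := alt j.
  rewrite asucc mod2 //; rewrite /C.
  move=> h0 [/eqP h1 /eqP h2] h3 h4; case: ifP => h; lia.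
have par : forall j, C (a j) = C (a 0) (+) odd j.
  elim=> [|j IH]; first by rewrite addbF.
  by rewrite step IH /=; case: (C (a 0)); case: (odd j).
have := par m; have := aneg 0; rewrite add0n => ->; rewrite a0 Hm oddD oddM /= addbT.
rewrite /C; move: Hlo; lia.
Qed.
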